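(* Let $\mathbf{X},\mathbf{Y}$ be sgrms over $\mathbb{R}^d$ on $[0,T]$. A map $\mathbf{Z}:[0,T]^2\to G(\mathbb{R}^d)$ coincides with $\mathbf{X}\boxplus\mathbf{Y}$ if and only if $\mathbf{Z}_{s,t}=\mathbf{Z}_{s,u}\otimes\mathbf{Z}_{u,t}$ for all $s,u,t\in[0,T]$ and, for every $s\in[0,T]$, $$\mathbf{Z}_{s,t}=\mathbf{X}_{s,t}\otimes\mathbf{Y}_{s,t}+R_{s,t}$$ for some $R_{s,t}\in T((\mathbb{R}^d))$ with $\langle R_{s,t},x\rangle=o(|t-s|)$ as $t\to s$ for all $x\in T(\mathbb{R}^d)$. Moreover, $$\mathbf{X}_{s,t}\otimes\mathbf{Y}_{s,t}=\mathbf{Y}_{s,t}\otimes\mathbf{X}_{s,t}+r_{s,t}=\mathbf{X}_{s,t}+\mathbf{Y}_{s,t}-\mathbf{1}+r'_{s,t}$$ for some $r_{s,t},r'_{s,t}\in T((\mathbb{R}^d))$ with $\langle r_{s,t},x\rangle,\langle r'_{s,t},x\rangle=o(|t-s|)$ as $t\to s$ for all $x\in T(\mathbb{R}^d)$.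
   Context: Fix $T>0$, $d\ge1$. $T((\mathbb{R}^d))$: formal tensor series $\sum_w\mathbf{x}^we_w$ over words in $\{1,\dots,d\}$ (incl. empty word, whose basis element $\mathbf{1}$ is the unit) with concatenation product $\otimes$; $T(\mathbb{R}^d)$ the polynomials; $\langle\mathbf{x},w\rangle=\mathbf{x}^w$, extended linearly. Shuffle product: bilinear, unit $\mathbf{1}$, $wi\sqcup\!\sqcup vj=(w\sqcup\!\sqcup vj)i+(wi\sqcup\!\sqcup v)j$. $G(\mathbb{R}^d)=\{\mathbf{x}:\langle\mathbf{x},\mathbf{1}\rangle=1,\ \langle\mathbf{x},v\sqcup\!\sqcup w\rangle=\langle\mathbf{x},v\rangle\langle\mathbf{x},w\rangle\ \forall v,w\}$, a group under $\otimes$; $\mathcal{L}((\mathbb{R}^d))$ the Lie series. An sgrm is a non-zero map $\mathbf{X}:[0,T]^2\to T((\mathbb{R}^d))$ with $\langle\mathbf{X}_{s,t},v\sqcup\!\sqcup w\rangle=\langle\mathbf{X}_{s,t},v\rangle\langle\mathbf{X}_{s,t},w\rangle$ for all words, $\mathbf{X}_{s,u}\otimes\mathbf{X}_{u,t}=\mathbf{X}_{s,t}$, and $t\mapsto\langle\mathbf{X}_{s,t},w\rangle$ smooth for all words $w$ and all $s$. Diagonal derivative $\dot{\mathbf{X}}_{s,s}=\partial_t|_{t=s}\mathbf{X}_{s,t}$ (a smooth $\mathcal{L}((\mathbb{R}^d))$-valued path). The canonical sum $\mathbf{X}\boxplus\mathbf{Y}$ of sgrms $\mathbf{X},\mathbf{Y}$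 is the sgrm $(s,t)\mapsto\mathbf{Z}_s^{-1}\otimes\mathbf{Z}_t$, where $\mathbf{Z}$ is the unique solution in $T((\mathbb{R}^d))$ (solved coordinatewise) of $\dot{\mathbf{Z}}_t=\mathbf{Z}_t\otimes(\dot{\mathbf{X}}_{t,t}+\dot{\mathbf{Y}}_{t,t})$, $\mathbf{Z}_0=\mathbf{1}$. *)

(* Defs.v *)
From mathcomp Require Import all_boot all_order all_algebra.
From mathcomp Require Import reals.
Set Implicit Arguments. Unset Strict Implicit. Unset Printing Implicit Defensive.
Import Order.TTheory GRing.Theory Num.Theory.
Local Open Scope ring_scope.

Section TensorSeries.
Variables (R : realType) (d : nat).

(* words in the alphabet {1,...,d}, modelled by 'I_d; [::] is the empty word *)
Definition word := seq 'I_d.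
(* formal tensor series sum_w x^w e_w, identified with w |-> x^w = <x,w> *)
Definition series := word -> R.
(* tensor polynomials T(R^d): finite linear combinations of words *)
Definition tpoly := seq (R * word).

Definition tone : series := fun w => (w == [::])%:R.
Definition tadd (x y : series) : series := fun w => x w + y w.
Definition tsub (x y : series) : series := fun w => x w - y w.
(* concatenation product: <x (x) y, w> = sum_{w = uv} <x,u><y,v> *)
Definition tmul (x y : series) : series :=
  fun w => \sum_(k < (size w).+1) x (take k w) * y (drop k w).

(* inverse for series with invertible constant term, computed from x^-1 (x) x = 1;
   fuel-based recursion on the length of the word *)
Fixpoint tinv_rec (n : nat) (x : series) (w : word) : R :=
  match n with
  | 0 => (x [::])^-1
  | n'.+1 => ((w == [::])%:R
              - \sum_(k < size w) tinv_rec n' x (take k w) * x (drop k w)) / x [::]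
  end.
Definition tinv (x : series) : series := fun w => tinv_rec (size w) x w.

Definition tpair (x : series) (p : tpoly) : R := \sum_(cw <- p) cw.1 * x cw.2.

(* shuffle product of words, as a multiset (list) of words.
   shrev works on reversed words (head = last letter) and implements
   wi sh vj = (w sh vj) i + (wi sh v) j,  w sh [::] = w, [::] sh w = w. *)
Fixpoint shrev (a b : word) {struct a} : seq word :=
  match a with
  | [::] => [:: b]
  | i :: a' =>
      (fix sh (b : word) : seq word :=
         match b with
         | [::] => [:: i :: a']
         | j :: b' => map (cons i) (shrev a' (j :: b')) ++ map (cons j) (sh b')
         end) b
  end.
Definition shuffle (v w : word) : seq word := map rev (shrev (rev v) (rev w)).
Definition pair_shuffle (x : series) (v w : word) : R :=
  \sum_(u <- shuffle v w) x u.

Definition grouplike (x : series) : Prop :=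
  x [::] = 1 /\ forall v w : word, pair_shuffle x v w = x v * x w.

End TensorSeries.

Section Calculus.
Variable R : realType.

Definition inI (T t : R) : Prop := 0 <= t <= T.

Definition is_deriv_within (T : R) (f : R -> R) (t l : R) : Prop :=
  forall e : R, 0 < e -> exists2 del : R, 0 < del &
    forall h : R, h != 0 -> `|h| < del -> inI T (t + h) ->
      `|(f (t + h) - f t) / h - l| < e.

Definition smooth_on (T : R) (f : R -> R) : Prop :=
  exists F : nat -> R -> R,
    (forall t, inI T t -> F 0%N t = f t) /\
    forall (n : nat) t, inI T t -> is_deriv_within T (F n) t (F n.+1 t).

Definition littleo_at (T : R) (s : R) (g : R -> R) : Prop :=
  forall e : R, 0 < e -> exists2 del : R, 0 < del &
    forall t : R, inI T t -> 0 < `|t - s| < del -> `|g t| <= e * `|t - s|.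

End Calculus.

Section Sgrm.
Variables (R : realType) (d : nat).
Local Notation series := (series R d).

Definition sgrm (T : R) (X : R -> R -> series) : Prop :=
  (exists s t, [/\ inI T s, inI T t & X s t <> (fun _ => 0)]) /\
  (forall s t, inI T s -> inI T t ->
     forall v w : word d, pair_shuffle (X s t) v w = X s t v * X s t w) /\
  (forall s u t, inI T s -> inI T u -> inI T t -> tmul (X s u) (X u t) = X s t) /\
  (forall s (w : word d), inI T s -> smooth_on T (fun t => X s t w)).

Definition diag_deriv (T : R) (X : R -> R -> series) (DX : R -> series) : Prop :=
  forall s (w : word d), inI T s -> is_deriv_within T (fun t => X s t w) s (DX s w).

Definition boxplus_ode (T : R) (X Y : R -> R -> series) (W : R -> series) : Prop :=
  W 0 = @tone R d /\
  exists DX DY, [/\ diag_deriv T X DX, diag_deriv T Y DY &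
    forall t (w : word d), inI T t ->
      is_deriv_within T (fun u => W u w) t (tmul (W t) (tadd (DX t) (DY t)) w)].

Definition is_boxplus (T : R) (X Y Z : R -> R -> series) : Prop :=
  exists W, boxplus_ode T X Y W /\
    forall s t, inI T s -> inI T t -> Z s t = tmul (tinv (W s)) (W t).

End Sgrm.

(* Main.v *)
Require Import Defs.
From mathcomp Require Import all_boot all_order all_algebra.
From mathcomp Require Import reals boolp ring lra.
Import Order.TTheory GRing.Theory Num.Theory.
Local Open Scope ring_scope.
Set Implicit Arguments. Unset Strict Implicit.

Lemma tmul_nil (R : realType) (d : nat) (x y : series R d) :
  tmul x y [::] = x [::] * y [::].
Proof. by rewrite /tmul big_ord_recl big_ord0 addr0. Qed.

Lemma tmul_cons (R : realType) (d : nat) (x y : series R d) a w :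
  tmul x y (a :: w) = x [::] * y (a :: w) + tmul (fun u => x (a :: u)) y w.
Proof. by rewrite /tmul big_ord_recl. Qed.

Lemma tmul_linl (R : realType) (d : nat) (c : R) (y z v : series R d) w :
  tmul (fun u => c * y u + z u) v w = c * tmul y v w + tmul z v w.
Proof.
rewrite /tmul mulr_sumr -big_split /=; apply: eq_bigr => k _.
by rewrite mulrDl mulrA.
Qed.

Lemma tmul0l (R : realType) (d : nat) (v : series R d) w :
  tmul (fun _ => 0) v w = 0.
Proof. by rewrite /tmul big1 // => k _; rewrite mul0r. Qed.

Lemma tmulA (R : realType) (d : nat) (x y z : series R d) :
  tmul (tmul x y) z = tmul x (tmul y z).
Proof.
apply/funext => w; elim: w x y => [|a w IH] x y.
  by rewrite !tmul_nil mulrA.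
rewrite !tmul_cons tmul_nil.
have -> : (fun u => tmul x y (a :: u)) =
          (fun u => x [::] * y (a :: u) + tmul (fun u => x (a :: u)) y u).
  by apply/funext => u; rewrite tmul_cons.
by rewrite tmul_linl IH mulrDr mulrA addrA.
Qed.

Lemma tmul1l (R : realType) (d : nat) (x : series R d) : tmul (@tone R d) x = x.
Proof.
apply/funext => -[|a w]; first by rewrite tmul_nil /tone /= mul1r.
rewrite tmul_cons /tone /= mul1r.
by rewrite (_ : (fun u => _) = (fun _ => 0)) ?tmul0l ?addr0 //; apply/funext.
Qed.

Lemma tmul1r (R : realType) (d : nat) (x : series R d) : tmul x (@tone R d) = x.
Proof.
apply/funext => w; elim: w x => [|a w IH] x; first by rewrite tmul_nil /tone /= mulr1.
by rewrite tmul_cons IH /tone /= mulr0 add0r.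
Qed.

Lemma tinv_recE (R : realType) (d : nat) (x : series R d) n w :
  tinv_rec n.+1 x w = ((w == [::])%:R
              - \sum_(k < size w) tinv_rec n x (take k w) * x (drop k w)) / x [::].
Proof. by []. Qed.

Lemma tinv_rec_S (R : realType) (d : nat) (x : series R d) n w :
  (size w <= n)%N -> tinv_rec n.+1 x w = tinv_rec n x w.
Proof.
elim: n w => [|n IH] w.
  by rewrite leqn0 size_eq0 => /eqP ->; rewrite /= big_ord0 subr0 div1r.
move=> hw; rewrite (tinv_recE _ n.+1) (tinv_recE _ n); congr (_ / _); congr (_ - _); apply: eq_bigr => k _.
by rewrite IH // size_take ltn_ord -ltnS (leq_trans (ltn_ord k) hw).
Qed.

Lemma tinv_rec_big (R : realType) (d : nat) (x : series R d) n w :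
  (size w <= n)%N -> tinv_rec n x w = tinv x w.
Proof.
rewrite /tinv; elim: n => [|n IH]; first by rewrite leqn0 => /eqP ->.
rewrite leq_eqVlt => /orP[/eqP <- //|h].
by rewrite tinv_rec_S // IH.
Qed.

Lemma tinv_nil (R : realType) (d : nat) (x : series R d) : tinv x [::] = (x [::])^-1.
Proof. by []. Qed.

Lemma tinvK (R : realType) (d : nat) (x : series R d) :
  x [::] != 0 -> tmul (tinv x) x = @tone R d.
Proof.
move=> hx; apply/funext => w; rewrite /tmul big_ord_recr /= take_size drop_size.
case: w => [|a w]; first by rewrite big_ord0 add0r tinv_nil mulVf.
rewrite /tinv /= mulfVK //.
rewrite (eq_bigr (fun k : 'I_(size w).+1 =>
   tinv_rec (size w) x (take k (a :: w)) * x (drop k (a :: w)))).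
  by rewrite addrC subrK.
move=> k _; rewrite (@tinv_rec_big _ _ x (size w)) // size_takel; [by rewrite -ltnS | exact: ltnW].
Qed.

Lemma tinv_nz (R : realType) (d : nat) (x : series R d) :
  x [::] != 0 -> tinv x [::] != 0.
Proof. by move=> h; rewrite tinv_nil invr_eq0. Qed.

Lemma tmulV (R : realType) (d : nat) (x : series R d) :
  x [::] != 0 -> tmul x (tinv x) = @tone R d.
Proof.
move=> hx; have hy := tinv_nz hx.
have e : tinv (tinv x) = x.
  by rewrite -[LHS]tmul1r -(tinvK hx) -tmulA (tinvK hy) tmul1l.
by rewrite -{1}e tinvK.
Qed.

Lemma linv_uniq (R : realType) (d : nat) (x y : series R d) :
  x [::] != 0 -> tmul y x = @tone R d -> y = tinv x.
Proof.
move=> hx h; by rewrite -[y]tmul1r -(tmulV hx) -tmulA h tmul1l.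
Qed.

Lemma idem_tone (R : realType) (d : nat) (x : series R d) :
  x [::] != 0 -> x = tmul x x -> x = @tone R d.
Proof.
move=> hx h; by rewrite -[x]tmul1l -(tinvK hx) tmulA -h.
Qed.

Definition Dv (R : realType) (T s : R) (f : R -> R) (l : R) :=
  littleo_at T s (fun t => f t - f s - l * (t - s)).

Lemma lo0 (R : realType) (T s : R) : littleo_at T s (fun _ => 0).
Proof.
move=> e e0; exists 1 => // t _ _; rewrite normr0 mulr_ge0 // ltW //.
Qed.

Lemma lo_ext (R : realType) (T s : R) (g h : R -> R) :
  (forall t, inI T t -> g t = h t) -> littleo_at T s g -> littleo_at T s h.
Proof.
move=> E H e e0; case: (H e e0) => del d0 Hd; exists del => // t It ht.
by rewrite -E //; apply: Hd.
Qed.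

Lemma lo_add (R : realType) (T s : R) (g h : R -> R) :
  littleo_at T s g -> littleo_at T s h -> littleo_at T s (fun t => g t + h t).
Proof.
move=> H1 H2 e e0; have e2 : 0 < e / 2 by rewrite divr_gt0.
case: (H1 _ e2) => d1 d10 Hd1; case: (H2 _ e2) => d2 d20 Hd2.
exists (Num.min d1 d2); first by rewrite lt_min d10 d20.
move=> t It /andP[t0]; rewrite lt_min => /andP[t1 t2].
have := Hd1 t It; rewrite t0 t1 => /(_ isT) h1.
have := Hd2 t It; rewrite t0 t2 => /(_ isT) h2.
apply: (le_trans (ler_normD _ _)).
rewrite [e in _ <= e * _](splitr e) mulrDl; exact: lerD.
Qed.

Lemma lo_scale (R : realType) (T s : R) (c : R) (g : R -> R) :
  littleo_at T s g -> littleo_at T s (fun t => c * g t).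
Proof.
move=> H e e0; have e1 : 0 < e / (`|c| + 1) by rewrite divr_gt0 // ltr_wpDl.
case: (H _ e1) => del d0 Hd; exists del => // t It ht.
have h := Hd t It ht; rewrite normrM.
have c1 : 0 < `|c| + 1 by rewrite ltr_wpDl.
apply: (le_trans (ler_wpM2l (normr_ge0 c) h)).
rewrite mulrA; apply: ler_wpM2r => //.
by rewrite mulrCA ger_pMr // ler_pdivrMr // mul1r lerDl.
Qed.

Lemma lo_sum (R : realType) (T s : R) (I : Type) (r : seq I) (P : pred I)
  (F : I -> R -> R) :
  (forall i, littleo_at T s (F i)) ->
  littleo_at T s (fun t => \sum_(i <- r | P i) F i t).
Proof.
move=> H; elim: r => [|i r IH].
  by apply: lo_ext (lo0 T s) => t _; rewrite big_nil.
case Pi: (P i).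
  by apply: lo_ext (lo_add (H i) IH) => t _; rewrite big_cons Pi.
by apply: lo_ext IH => t _; rewrite big_cons Pi.
Qed.

Lemma Dv_bound (R : realType) (T s : R) f l :
  Dv T s f l -> exists2 del, 0 < del &
    forall t, inI T t -> `|t - s| < del -> `|f t - f s| <= (`|l| + 1) * `|t - s|.
Proof.
move=> H; case: (H 1 ltr01) => del d0 Hd; exists del => // t It td.
have [ts|ts] := eqVneq t s.
  by rewrite ts !subrr normr0 mulr0.
have t0 : 0 < `|t - s| by rewrite normr_gt0 subr_eq0.
have := Hd t It; rewrite t0 td => /(_ isT); rewrite mul1r => h.
have -> : f t - f s = (f t - f s - l * (t - s)) + l * (t - s) by rewrite subrK.
apply: (le_trans (ler_normD _ _)); rewrite mulrDl mul1r normrM addrC.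
by rewrite lerD.
Qed.

Lemma lo_prod (R : realType) (T s : R) (a b : R -> R) (Ca Cb da db : R) :
  0 <= Ca -> 0 <= Cb -> 0 < da -> 0 < db ->
  (forall t, inI T t -> `|t - s| < da -> `|a t| <= Ca * `|t - s|) ->
  (forall t, inI T t -> `|t - s| < db -> `|b t| <= Cb * `|t - s|) ->
  littleo_at T s (fun t => a t * b t).
Proof.
move=> Ca0 Cb0 da0 db0 Ha Hb e e0.
have K1 : 0 < Ca * Cb + 1 by rewrite ltr_wpDl // mulr_ge0.
have e1 : 0 < e / (Ca * Cb + 1) by rewrite divr_gt0.
exists (Num.min (Num.min da db) (e / (Ca * Cb + 1))).
  by rewrite !lt_min da0 db0 e1.
move=> t It /andP[t0]; rewrite !lt_min => /andP[/andP[ta tb] te].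
have h1 := Ha t It ta; have h2 := Hb t It tb.
rewrite normrM.
apply: (le_trans (ler_pM (normr_ge0 _) (normr_ge0 _) h1 h2)).
rewrite mulrACA mulrA; apply: ler_wpM2r => //.
rewrite ltr_pdivlMr // in te.
apply: le_trans (ltW te).
by rewrite mulrC mulrDr mulr1 lerDl.
Qed.

Lemma Dv_ext (R : realType) (T s : R) f g l :
  inI T s -> (forall t, inI T t -> f t = g t) -> Dv T s f l -> Dv T s g l.
Proof.
move=> Is E; apply: lo_ext => t It; by rewrite !E.
Qed.

Lemma Dv_cst (R : realType) (T s : R) (c : R) : Dv T s (fun _ => c) 0.
Proof. by apply: lo_ext (lo0 T s) => t _; rewrite subrr mul0r subr0. Qed.

Lemma Dv_add (R : realType) (T s : R) f g a b :
  Dv T s f a -> Dv T s g b -> Dv T s (fun t => f t + g t) (a + b).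
Proof.
move=> Hf Hg; apply: lo_ext (lo_add Hf Hg) => t _.
rewrite mulrDl; lra.
Qed.

Lemma Dv_scale (R : realType) (T s : R) (c : R) f a :
  Dv T s f a -> Dv T s (fun t => c * f t) (c * a).
Proof.
move=> Hf; apply: lo_ext (lo_scale c Hf) => t _.
ring.
Qed.

Lemma Dv_mul (R : realType) (T s : R) f g a b :
  Dv T s f a -> Dv T s g b ->
  Dv T s (fun t => f t * g t) (a * g s + f s * b).
Proof.
move=> Hf Hg.
case: (Dv_bound Hf) => da da0 Ha; case: (Dv_bound Hg) => db db0 Hb.
have P := lo_prod (addr_ge0 (normr_ge0 a) ler01) (addr_ge0 (normr_ge0 b) ler01)
   da0 db0 Ha Hb.
apply: lo_ext (lo_add (lo_add (lo_scale (g s) Hf) (lo_scale (f s) Hg)) P) => t _.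
rewrite /=. ring.
Qed.

Lemma Dv_sum (R : realType) (T s : R) (I : Type) (r : seq I) (P : pred I)
  (F : I -> R -> R) (l : I -> R) :
  (forall i, Dv T s (F i) (l i)) ->
  Dv T s (fun t => \sum_(i <- r | P i) F i t) (\sum_(i <- r | P i) l i).
Proof.
move=> H; elim: r => [|i r IH].
  by apply: lo_ext (Dv_cst T s 0) => t _; rewrite !big_nil.
case Pi: (P i).
  by apply: lo_ext (Dv_add (H i) IH) => t _; rewrite !big_cons Pi.
by apply: lo_ext IH => t _; rewrite !big_cons Pi.
Qed.

Lemma Dv_lo (R : realType) (T s : R) f g l :
  Dv T s f l -> Dv T s g l -> f s = g s -> littleo_at T s (fun t => f t - g t).
Proof.
move=> Hf Hg E; apply: lo_ext (lo_add Hf (lo_scale (-1) Hg)) => t _.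
rewrite E; ring.
Qed.

Lemma lo_Dv (R : realType) (T s : R) g :
  littleo_at T s g -> g s = 0 -> Dv T s g 0.
Proof.
move=> H E; apply: lo_ext H => t _; by rewrite E mul0r !subr0.
Qed.

Lemma deriv_Dv (R : realType) (T s : R) f l :
  is_deriv_within T f s l -> Dv T s f l.
Proof.
move=> H e e0; case: (H e e0) => del d0 Hd; exists del => // t It /andP[t0 td].
have h0 : t - s != 0 by rewrite -normr_gt0.
have := Hd (t - s) h0 td; rewrite addrC subrK => /(_ It) /ltW h.
have -> : f t - f s - l * (t - s) = ((f t - f s) / (t - s) - l) * (t - s).
  by rewrite mulrBl mulfVK.
by rewrite normrM ler_wpM2r.
Qed.

Lemma Dv_deriv (R : realType) (T s : R) f l :
  Dv T s f l -> is_deriv_within T f s l.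
Proof.
move=> H e e0; have e2 : 0 < e / 2 by rewrite divr_gt0.
case: (H _ e2) => del d0 Hd; exists del => // h h0 hd Ih.
have hh : s + h - s = h by rewrite addrC addKr.
have := Hd (s + h) Ih; rewrite hh normr_gt0 h0 hd => /(_ isT) hle.
have -> : (f (s + h) - f s) / h - l = (f (s + h) - f s - l * h) / h.
  by rewrite [RHS]mulrBl mulfK.
have hp : 0 < `|h| by rewrite normr_gt0.
rewrite normrM normfV ltr_pdivrMr //.
apply: le_lt_trans hle _; rewrite ltr_pM2r // ltr_pdivrMr // ltr_pMr //.
by rewrite ltr1n.
Qed.

Lemma Dv_tmul (R : realType) (d : nat) (T s : R) (A B : R -> series R d)
  (a b : series R d) w :
  (forall v, Dv T s (fun t => A t v) (a v)) ->
  (forall v, Dv T s (fun t => B t v) (b v)) ->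
  Dv T s (fun t => tmul (A t) (B t) w) (tmul a (B s) w + tmul (A s) b w).
Proof.
move=> HA HB; rewrite /tmul -big_split /=.
by apply: Dv_sum => k; apply: Dv_mul.
Qed.

Lemma shrev_nil (d : nat) (a : word d) : shrev a [::] = [:: a].
Proof. by case: a. Qed.

Lemma pair_shuffle_nil (R : realType) (d : nat) (x : series R d) w :
  pair_shuffle x w [::] = x w.
Proof.
by rewrite /pair_shuffle /shuffle /= shrev_nil /= big_cons big_nil addr0 revK.
Qed.

Lemma sgrm_one (R : realType) (d : nat) (T : R) (X : R -> R -> series R d) :
  sgrm T X -> forall s t, inI T s -> inI T t -> X s t [::] = 1.
Proof.
case=> [[s0 [t0 [Is0 It0 nz]]] [Hsh [Hchen _]]].
have bin : forall s t, inI T s -> inI T t -> X s t [::] = 0 \/ X s t [::] = 1.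
  move=> s t Is It; have := Hsh s t Is It [::] [::].
  rewrite pair_shuffle_nil => /eqP; rewrite -subr_eq0 -{1}(mulr1 (X s t [::])).
  rewrite -mulrBr mulf_eq0 subr_eq0 => /orP[/eqP ->|/eqP <-]; by [left|right].
have nz0 : X s0 t0 [::] != 0.
  apply/eqP => h; apply: nz; apply/funext => w.
  transitivity (X s0 t0 w * X s0 t0 [::]); first by rewrite -(Hsh s0 t0 Is0 It0 w [::]) pair_shuffle_nil.
  by rewrite h mulr0.
have ch : forall s u t, inI T s -> inI T u -> inI T t ->
    X s t [::] = X s u [::] * X u t [::].
  by move=> s u t Is Iu It; rewrite -(Hchen s u t) // tmul_nil.
move=> s t Is It.
have e1 : X s0 t0 [::] = X s0 s [::] * (X s t [::] * X t t0 [::]).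
  by rewrite (ch s0 s t0) // (ch s t t0).
case: (bin s t Is It) => // h0.
by move: nz0; rewrite e1 h0 mul0r mulr0 eqxx.
Qed.

Lemma sgrm_diag (R : realType) (d : nat) (T : R) (X : R -> R -> series R d) :
  sgrm T X -> forall s, inI T s -> X s s = @tone R d.
Proof.
move=> H s Is; apply: idem_tone; first by rewrite (sgrm_one H) // oner_neq0.
by case: H => _ [_ [Hc _]]; rewrite Hc.
Qed.

Lemma sgrm_DX (R : realType) (d : nat) (T : R) (X : R -> R -> series R d) :
  sgrm T X -> exists DX, diag_deriv T X DX.
Proof.
case=> _ [_ [_ Hsm]].
have : forall p : R * word d, exists l : R, inI T p.1 ->
    is_deriv_within T (fun t => X p.1 t p.2) p.1 l.
  move=> [s w]; case: (pselect (inI T s)) => Is; last by exists 0.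
  case: (Hsm s w Is) => F [F0 FD]; exists (F 1%N s) => _ /=.
  move=> e e0; case: (FD 0%N s Is e e0) => del d0 Hd; exists del => // h h0 hd Ih.
  by rewrite -!F0 //; apply: Hd.
case/choice => f Hf; exists (fun s w => f (s, w)) => s w Is.
exact: (Hf (s, w) Is).
Qed.

Lemma lo_tpair (R : realType) (d : nat) (T s : R) (Rm : R -> series R d) :
  (forall v, littleo_at T s (fun t => Rm t v)) ->
  forall p, littleo_at T s (fun t => tpair (Rm t) p).
Proof.
move=> H p; rewrite /tpair; apply: lo_sum => cw; exact: lo_scale.
Qed.

Lemma tpair1 (R : realType) (d : nat) (x : series R d) v :
  tpair x [:: (1, v)] = x v.
Proof. by rewrite /tpair big_cons big_nil /= mul1r addr0. Qed.

Lemma XY_Dv (R : realType) (d : nat) (T : R) (X Y : R -> R -> series R d) DX DY s :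
  sgrm T X -> sgrm T Y -> diag_deriv T X DX -> diag_deriv T Y DY -> inI T s ->
  forall w, Dv T s (fun t => tmul (X s t) (Y s t) w) (DX s w + DY s w).
Proof.
move=> sX sY hX hY Is w.
have := @Dv_tmul R d T s (X s) (Y s) (DX s) (DY s) w
  (fun v => deriv_Dv (hX s v Is)) (fun v => deriv_Dv (hY s v Is)).
by rewrite (sgrm_diag sX) // (sgrm_diag sY) // tmul1r tmul1l.
Qed.

Lemma inI0 (R : realType) (T : R) : 0 < T -> inI T 0.
Proof. by move=> T0; rewrite /inI lexx ltW. Qed.

Lemma grouplike1 (R : realType) (d : nat) (x : series R d) :
  grouplike x -> x [::] = 1.
Proof. by case. Qed.

Unset Implicit Arguments. Set Strict Implicit.

Theorem proposition2p16 (R : realType) (d : nat) (T : R)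
  (X Y : R -> R -> series R d) :
  0 < T -> (0 < d)%N -> sgrm T X -> sgrm T Y ->
  (forall Z : R -> R -> series R d,
     (forall s t, inI T s -> inI T t -> grouplike (Z s t)) ->
     (is_boxplus T X Y Z <->
      ((forall s u t, inI T s -> inI T u -> inI T t ->
          Z s t = tmul (Z s u) (Z u t)) /\
       (forall s, inI T s ->
          exists Rm : R -> series R d,
            (forall t, inI T t -> Z s t = tadd (tmul (X s t) (Y s t)) (Rm t)) /\
            (forall p : tpoly R d, littleo_at T s (fun t => tpair (Rm t) p)))))) /\
  (forall s, inI T s ->
     exists r r' : R -> series R d,
       (forall t, inI T t ->
          tmul (X s t) (Y s t) = tadd (tmul (Y s t) (X s t)) (r t) /\
          tmul (X s t) (Y s t) = tadd (tsub (tadd (X s t) (Y s t)) (@tone R d)) (r' t)) /\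
       (forall p : tpoly R d,
          littleo_at T s (fun t => tpair (r t) p) /\
          littleo_at T s (fun t => tpair (r' t) p))).
Proof.
move=> T0 _ sX sY.
have [DX hX] := sgrm_DX sX; have [DY hY] := sgrm_DX sY.
split; last first.
  move=> s Is.
  exists (fun t => tsub (tmul (X s t) (Y s t)) (tmul (Y s t) (X s t))).
  exists (fun t => tsub (tmul (X s t) (Y s t)) (tsub (tadd (X s t) (Y s t)) (@tone R d))).
  split.
    by move=> t It; split; apply/funext => w; rewrite /tadd /tsub addrC subrK.
  move=> p; split; apply: lo_tpair => v; apply: Dv_lo.
  - exact: (XY_Dv sX sY hX hY Is).
  - by have := XY_Dv sY sX hY hX Is v; rewrite addrC.
  - by rewrite (sgrm_diag sX) // (sgrm_diag sY) // tmul1l.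
  - exact: (XY_Dv sX sY hX hY Is).
  - rewrite /tsub /tadd -[DX s v + DY s v]addr0.
    apply: Dv_add; first exact: Dv_add (deriv_Dv (hX s v Is)) (deriv_Dv (hY s v Is)).
    exact: Dv_cst.
  - rewrite (sgrm_diag sX) // (sgrm_diag sY) // tmul1l /tsub /tadd.
    by rewrite addrK.
move=> Z HZ; split.
  case=> W [[W0 [DX' [DY' [hX' hY' hW]]]] HZW].
  have Wu : forall u, inI T u -> W u [::] != 0.
    move=> u Iu; apply/eqP => h.
    have := grouplike1 (HZ u u Iu Iu); rewrite HZW // tmul_nil tinv_nil h.
    by rewrite mulr0 => /eqP; rewrite eq_sym oner_eq0.
  split.
    move=> s u t Is Iu It; rewrite !HZW //.
    by rewrite tmulA -(tmulA (W u)) tmulV ?Wu // tmul1l.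
  move=> s Is; exists (fun t => tsub (Z s t) (tmul (X s t) (Y s t))); split.
    by move=> t It; apply/funext => w; rewrite /tadd /tsub addrC subrK.
  apply: lo_tpair => v; apply: Dv_lo.
  - apply: (Dv_ext (f := fun t => tmul (tinv (W s)) (W t) v)) => //.
      by move=> t It; rewrite HZW.
    have := @Dv_tmul R d T s (fun _ => tinv (W s)) W (fun _ => 0)
      (tmul (W s) (tadd (DX' s) (DY' s))) v
      (fun v => Dv_cst T s _) (fun v => deriv_Dv (hW s v Is)).
    move=> h; rewrite tmul0l add0r -tmulA tinvK ?Wu // tmul1l in h; exact: h.
  - exact: (XY_Dv sX sY hX' hY' Is).
  - by rewrite HZW // tinvK ?Wu // (sgrm_diag sX) // (sgrm_diag sY) // tmul1l.
case=> Hc Hloc.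
have Zd : forall s, inI T s -> Z s s = @tone R d.
  move=> s Is; apply: idem_tone; first by rewrite (grouplike1 (HZ s s Is Is)) oner_neq0.
  exact: Hc.
have I0 := inI0 T0.
exists (fun t => Z 0 t); split; last first.
  move=> s t Is It; rewrite (Hc s 0 t) //; congr tmul.
  apply: linv_uniq; first by rewrite (grouplike1 (HZ 0 s I0 Is)) oner_neq0.
  by rewrite -Hc // Zd.
split; first exact: Zd.
exists DX, DY; split => // t w It; apply: Dv_deriv.
case: (Hloc t It) => Rm [HR Hlo].
have Rt : forall v, Rm t v = 0.
  move=> v; have := HR t It; rewrite Zd // (sgrm_diag sX) // (sgrm_diag sY) // tmul1l.
  move=> /(congr1 (fun f => f v)); rewrite /tadd => h.
  by rewrite -(addKr (@tone R d v) (Rm t v)) -h addNr.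
apply: (Dv_ext (f := fun u => tmul (Z 0 t) (tadd (tmul (X t u) (Y t u)) (Rm u)) w)) => //.
  by move=> u Iu; rewrite (Hc 0 t u) // HR.
have := @Dv_tmul R d T t (fun _ => Z 0 t) (fun u => tadd (tmul (X t u) (Y t u)) (Rm u))
  (fun _ => 0) (tadd (DX t) (DY t)) w (fun v => Dv_cst T t _).
rewrite tmul0l add0r; apply => v.
rewrite [tadd (DX t) (DY t) v]/tadd -[DX t v + DY t v]addr0.
apply: Dv_add; first exact: (XY_Dv sX sY hX hY It).
apply: lo_Dv => //.
by apply: lo_ext (Hlo [:: (1, v)]) => u _; rewrite tpair1.
Qed.
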